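(* Let $\mathbb{F}$ be a field of characteristic zero, $n\ge1$, $B\in\mathbb{F}^{n\times n}$ symmetric, and let $G=G(\mathbf 1,B)$ with twin-reduced graph $G'=G(a',B')$. Then $\Gamma(\mathbf 1,B)$ acts transitively on $G$ if and only if $\Gamma(a',B')$ acts transitively on $G'$; and $\Gamma(\mathbf 1,B)$ acts generously transitively on $G$ if and only if $\Gamma(a',B')$ acts generously transitively on $G'$.
   Context: $G(a,B)$ denotes the weighted graph on vertex set $[n]$ with vertex weights $a_i$ and edge weights $B_{i,j}$; $\mathbf 1$ is the all-ones vector. Vertices $i,j$ are twins if rows $i$ and $j$ of $B$ are equal; let $C_1,\dots,C_m$ be the twin equivalence classes. The twin-reduced graph $G(a',B')$ has vertex set $[m]$, vertex weights $a'_i=\sum_{j\in C_i}a_j$ (here $=|C_i|$), and $B'$ is obtained from $B$ by deleting, for each $i$, all but one of the rows and columns indexed by $C_i$. $\Gamma(a,B)$ is the group of permutations $\gamma$ of the vertex set with $a_{\gamma(i)}=a_i$ and $B_{\gamma(i),\gamma(j)}=B_{i,j}$ for all $i,j$. A permutation group $\Gamma$ acts generously transitively if for all vertices $u,v$ there is $\gamma\in\Gamma$ with $\gamma(u)=v$ and $\gamma(v)=u$. *)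

(* Defs.v *)
From HB Require Import structures.
From mathcomp Require Import all_boot all_order all_algebra all_fingroup.
Set Implicit Arguments. Unset Strict Implicit. Unset Printing Implicit Defensive.
Import GRing.Theory.
Local Open Scope ring_scope.

(* Weighted graph G(a,B) on vertex set 'I_n: vertex weights a, edge weights B. *)

Definition twins (R : fieldType) (n : nat) (B : 'M[R]_n) (i j : 'I_n) : bool :=
  row i B == row j B.

Definition in_Gamma (R : fieldType) (n : nat) (a : 'I_n -> R) (B : 'M[R]_n)
    (g : {perm 'I_n}) : Prop :=
  (forall i, a (g i) = a i) /\ (forall i j, B (g i) (g j) = B i j).

Definition Gamma_transitive (R : fieldType) (n : nat) (a : 'I_n -> R)
    (B : 'M[R]_n) : Prop :=
  forall u v : 'I_n, exists g, in_Gamma a B g /\ g u = v.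

Definition Gamma_gen_transitive (R : fieldType) (n : nat) (a : 'I_n -> R)
    (B : 'M[R]_n) : Prop :=
  forall u v : 'I_n, exists g, in_Gamma a B g /\ g u = v /\ g v = u.

Definition twin_reduction (R : fieldType) (n m : nat) (B : 'M[R]_n)
    (r : 'I_m -> 'I_n) : Prop :=
  (forall k l, twins B (r k) (r l) -> k = l) /\
  (forall i, exists k, twins B i (r k)).

Definition reduced_weights (R : fieldType) (n m : nat) (a : 'I_n -> R)
    (B : 'M[R]_n) (r : 'I_m -> 'I_n) : 'I_m -> R :=
  fun k => \sum_(j | twins B j (r k)) a j.

Definition reduced_matrix (R : fieldType) (n m : nat) (B : 'M[R]_n)
    (r : 'I_m -> 'I_n) : 'M[R]_m :=
  \matrix_(k, l) B (r k) (r l).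

(* Main.v *)
Require Import Defs.
From HB Require Import structures.
From mathcomp Require Import all_boot all_order all_algebra all_fingroup.
Set Implicit Arguments. Unset Strict Implicit.
Import GRing.Theory.
Local Open Scope ring_scope.

Lemma natr_inj0 (R : fieldType) (h : [pchar R] =i pred0) (m n : nat) :
  m%:R = n%:R :> R -> m = n.
Proof.
move=> E. have P := (pcharf0P R).1 h.
wlog le: m n E / (m <= n)%N.
  move=> W; case: (leqP m n) => [l|/ltnW l]; first exact: W.
  by symmetry; apply: W.
have: (n - m)%:R == 0 :> R by rewrite natrB // E subrr.
rewrite P subn_eq0 => l2; apply/eqP; by rewrite eqn_leq le l2.
Qed.

Lemma twins_refl (R : fieldType) n (B : 'M[R]_n) i : twins B i i.
Proof. by rewrite /twins eqxx. Qed.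

Lemma twins_sym (R : fieldType) n (B : 'M[R]_n) i j : twins B i j -> twins B j i.
Proof. by rewrite /twins eq_sym. Qed.

Lemma twins_trans (R : fieldType) n (B : 'M[R]_n) i j k :
  twins B i j -> twins B j k -> twins B i k.
Proof. by rewrite /twins => /eqP -> . Qed.

Lemma twinsE (R : fieldType) n (B : 'M[R]_n) i j x :
  twins B i j -> B i x = B j x.
Proof. by move=> /eqP/rowP/(_ x); rewrite !mxE. Qed.

Lemma Bcls (R : fieldType) n (B : 'M[R]_n) (hsym : B^T = B) i i' j j' :
  twins B i i' -> twins B j j' -> B i j = B i' j'.
Proof.
move=> Hi Hj; rewrite (twinsE j Hi).
have E : forall x y, B x y = B y x.
  by move=> x y; rewrite -{1}hsym mxE.
by rewrite E (twinsE i' Hj) E.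
Qed.

Definition presB (R : fieldType) n (B : 'M[R]_n) (g : {perm 'I_n}) :=
  forall i j, B (g i) (g j) = B i j.

Lemma twins_perm (R : fieldType) n (B : 'M[R]_n) g i j :
  presB B g -> twins B (g i) (g j) = twins B i j.
Proof.
move=> Hg; apply/eqP/eqP => /rowP H; apply/rowP => x.
  by have := H (g x); rewrite !mxE !Hg.
by rewrite !mxE -(permKV g x) !Hg; have := H (g^-1%g x); rewrite !mxE.
Qed.

Lemma tperm_twins (R : fieldType) n (B : 'M[R]_n) x y z :
  twins B x y -> twins B (tperm x y z) z.
Proof.
move=> H; case: tpermP => [->|->|_ _]; last exact: twins_refl.
  exact: twins_sym.
exact: H.
Qed.

Lemma tperm_pres (R : fieldType) n (B : 'M[R]_n) (hsym : B^T = B) x y :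
  twins B x y -> presB B (tperm x y).
Proof.
by move=> H i j; apply: Bcls => //; apply: tperm_twins.
Qed.

Lemma comp_pres (R : fieldType) n (B : 'M[R]_n) g h :
  presB B g -> presB B h -> presB B (g * h)%g.
Proof. by move=> Hg Hh i j; rewrite !permM Hh Hg. Qed.

Lemma pres_Gamma (R : fieldType) n (B : 'M[R]_n) g :
  presB B g -> in_Gamma (fun _ => 1) B g.
Proof. by []. Qed.

Lemma rw_card (R : fieldType) n m (B : 'M[R]_n) (r : 'I_m -> 'I_n) k :
  reduced_weights (fun _ => 1) B r k = #|[set j | twins B j (r k)]|%:R.
Proof.
rewrite /reduced_weights.
have -> : \sum_(j | twins B j (r k)) (1:R) = \sum_(j in [set j | twins B j (r k)]) 1.
  by apply: eq_bigl => j; rewrite inE.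
by rewrite sumr_const.
Qed.

Theorem lemma3p1 (R : fieldType) (n : nat) (B : 'M[R]_n)
  (hchar : [pchar R] =i pred0) (hn : (0 < n)%N) (hsym : B^T = B)
  (m : nat) (r : 'I_m -> 'I_n) (hr : twin_reduction B r) :
  let one := fun _ : 'I_n => (1 : R) in
  let a' := reduced_weights one B r in
  let B' := reduced_matrix B r in
  (Gamma_transitive one B <-> Gamma_transitive a' B') /\
  (Gamma_gen_transitive one B <-> Gamma_gen_transitive a' B').
Proof.
move=> one a' B'.
have [hu hex] := hr.
pose cls x := xchoose (hex x).
have clsP x : twins B x (r (cls x)) := xchooseP (hex x).
have clsU x k : twins B x (r k) -> cls x = k.
  by move=> H; apply: hu; apply: twins_trans (twins_sym (clsP x)) H.
have clsr k : cls (r k) = k by apply: clsU; apply: twins_refl.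
have D1 : forall g, presB B g ->
    exists s : {perm 'I_m}, in_Gamma a' B' s /\ forall k, s k = cls (g (r k)).
  move=> g Hg.
  have inj : injective (fun k => cls (g (r k))).
    move=> k k' /= E; apply: hu; rewrite -(twins_perm _ _ Hg).
    apply: twins_trans (clsP _) _; rewrite E; exact: twins_sym (clsP _).
  exists (perm inj); split; last by move=> k; rewrite permE.
  split => [k|k l]; rewrite !permE.
  - rewrite /a' !rw_card; congr (_%:R).
    have -> : [set j | twins B j (r (cls (g (r k))))] = g @: [set j | twins B j (r k)].
      apply/setP => x; rewrite inE; apply/idP/imsetP.
      + move=> H; exists (g^-1%g x); last by rewrite permKV.
        rewrite inE -(twins_perm _ _ Hg) permKV.
        exact: twins_trans H (twins_sym (clsP _)).
      + move=> [y]; rewrite inE => Hy ->.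
        apply: twins_trans (clsP (g (r k))).
        by rewrite twins_perm.
    by rewrite card_imset //; exact: perm_inj.
  - rewrite /B' !mxE -(Hg (r k) (r l)).
    by apply: Bcls => //; apply: twins_sym; apply: clsP.
have D2 : forall s : {perm 'I_m}, in_Gamma a' B' s ->
    exists h : {perm 'I_n}, presB B h /\ forall x, twins B (h x) (r (s (cls x))).
  move=> s [Ha Hb].
  have card k : #|[set j | twins B j (r (s k))]| = #|[set j | twins B j (r k)]|.
    by apply: (natr_inj0 hchar); rewrite -!rw_card; apply: Ha.
  pose e k := enum [set j | twins B j (r k)].
  pose d := Ordinal hn.
  pose f x := nth d (e (s (cls x))) (index x (e (cls x))).
  have fP x : twins B (f x) (r (s (cls x))).
    have : f x \in e (s (cls x)).
      rewrite mem_nth // /e -cardE card cardE index_mem mem_enum inE; exact: clsP.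
    by rewrite mem_enum inE.
  have finj : injective f.
    move=> x y E.
    have Hc : cls x = cls y.
      apply: (perm_inj (s:=s)); apply: hu.
      have H1 := fP x; have H2 := fP y; rewrite E in H1.
      exact: twins_trans (twins_sym H1) H2.
    move: E; rewrite /f Hc => E.
    have ix : x \in e (cls y) by rewrite mem_enum inE -Hc clsP.
    have iy : y \in e (cls y) by rewrite mem_enum inE clsP.
    move/eqP: E; rewrite nth_uniq ?enum_uniq //; last first.
    - by rewrite /e -cardE card cardE index_mem.
    - by rewrite /e -cardE card cardE index_mem.
    by move/eqP=> Ei; rewrite -(nth_index d ix) Ei (nth_index d iy).
  exists (perm finj); split.
    move=> i j; rewrite !permE.
    have := Hb (cls i) (cls j); rewrite /B' !mxE => Hb'.
    rewrite (Bcls hsym (fP i) (fP j)) Hb'.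
    by apply: Bcls => //; apply: twins_sym; apply: clsP.
  by move=> x; rewrite permE.
split; split.
- move=> T k l; have [g [[_ Hg] E]] := T (r k) (r l).
  have [s [Hs sE]] := D1 g Hg.
  by exists s; split => //; rewrite sE E clsr.
- move=> T u v; have [s [Hs E]] := T (cls u) (cls v).
  have [h [Hh hP]] := D2 s Hs.
  have tw : twins B (h u) v.
    apply: twins_trans (hP u) _; rewrite E; exact: twins_sym (clsP v).
  exists (h * tperm (h u) v)%g; split.
    apply: pres_Gamma; exact: comp_pres Hh (tperm_pres hsym tw).
  by rewrite permM tpermL.
- move=> T k l; have [g [[_ Hg] [E1 E2]]] := T (r k) (r l).
  have [s [Hs sE]] := D1 g Hg.
  by exists s; split => //; rewrite !sE ?E1 ?E2 !clsr.
- move=> T u v; case: (boolP (twins B u v)) => tuv.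
    exists (tperm u v); split; first by apply: pres_Gamma; exact: tperm_pres.
    by rewrite tpermL tpermR.
  have [s [Hs [E1 E2]]] := T (cls u) (cls v).
  have [h [Hh hP]] := D2 s Hs.
  have tw : twins B (h u) v.
    apply: twins_trans (hP u) _; rewrite E1; exact: twins_sym (clsP v).
  pose g1 := (h * tperm (h u) v)%g.
  have g1u : g1 u = v by rewrite permM tpermL.
  have Pg1 : presB B g1 by exact: comp_pres Hh (tperm_pres hsym tw).
  have tw2 : twins B (g1 v) u.
    rewrite permM; apply: twins_trans (tperm_twins _ tw) _.
    apply: twins_trans (hP v) _; rewrite E2; exact: twins_sym (clsP u).
  exists (g1 * tperm (g1 v) u)%g; split.
    apply: pres_Gamma; exact: comp_pres Pg1 (tperm_pres hsym tw2).
  split; last by rewrite permM tpermL.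
  rewrite permM g1u tpermD //.
    apply/eqP => e; move: tw2; rewrite e => /twins_sym H.
    by rewrite H in tuv.
  apply/eqP => e; move: tuv; rewrite e; by rewrite twins_refl.
Qed.
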